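(* Let $\mathbb{E}^\ast_n=\{(a,b)\in\mathbb{N}^2:1\le a+b\le n\}$ and define $\vec v:\mathbb{E}^\ast_n\to W$ by \[\vec v(a,b)=(\underbrace{1,\dots,1}_{a},\underbrace{0,\dots,0}_{n-a-b},\underbrace{-1,\dots,-1}_{b}).\] (a) The map $(a,b)\mapsto \mathbb{R}_{\ge0}\vec v(a,b)$ is a bijection from $\mathbb{E}^\ast_n$ onto the set of extreme rays of $I(\mathfrak{gl}_n,V\oplus\bigwedge^2)$. (b) For $S\subseteq[n]$, the extreme rays lying in the chamber $C(S)$ are exactly those generated by $\vec v(\pi_\ell^S,\ell-\pi_\ell^S)$ for $\ell=1,\dots,n$, where $\pi_\ell^S=|S\cap[n-\ell+1,\infty)|$.
   Context: Identify the diagonal Cartan subalgebra of $\mathfrak{gl}_n$ with $\mathbb{R}^n$ with coordinates $x_1,\dots,x_n$. Let $W=\{x_1\ge\cdots\ge x_n\}$ and $W^0=\{x_1>\cdots>x_n\}$. For $1\le i\le j\le n$ let $\lambda_{i,j}^\perp$ be the hyperplane $x_i+x_j=0$ (for $i=j$: $x_i=0$); $I(\mathfrak{gl}_n,V\oplus\bigwedge^2)$ is the arrangement of these hyperplanes restricted to $W$. Chambers are the closures of the connected components of $W^0\setminus\bigcup\lambda_{i,j}^\perp$; a face is a chamber or the intersection of a chamber with a supporting hyperplane; an extreme ray is a face that is a half-line. For $S=\{a_1>\cdots>a_k\}\subseteq[n]$, $C(S)$ is the subset of $W$ on which, for $1\le i\le j\le n$, $x_i+x_j\ge0$ if $i\le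 k$ and $j\le i+a_i-1$, and $x_i+x_j\le0$ otherwise (row $i$ of the right-justified sign tableau of the $x_i+x_j$ has $a_i$ plus signs for $i\le k$, none for $i>k$); these are exactly the chambers. *)

(* Defs.v *)
(* Points of R^n are row vectors 'rV[R]_n; the paper's
   coordinate x_(i+1) is x 0 i (0-based index i : 'I_n).
   Subsets of R^n are predicates 'rV[R]_n -> Prop. *)
From HB Require Import structures.
From mathcomp Require Import all_boot all_order all_algebra.
Set Implicit Arguments. Unset Strict Implicit. Unset Printing Implicit Defensive.
Import Order.TTheory GRing.Theory Num.Theory.
Local Open Scope ring_scope.

Section Defs.
Variables (R : realFieldType) (n : nat).

Definition pt := 'rV[R]_n.
Definition ptset := pt -> Prop.

Definition dotv (l x : pt) : R := \sum_(i < n) l 0 i * x 0 i.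

Definition Wset : ptset := fun x => forall i j : 'I_n, (i <= j)%N -> x 0 j <= x 0 i.

(* S is a subset of [n] = {1,...,n}; the element i : 'I_n stands for i+1.
   Sdesc S = [a_1; ...; a_k] with a_1 > ... > a_k the elements of S. *)
Definition Sdesc (S : {set 'I_n}) : seq nat :=
  sort geq [seq (nat_of_ord s).+1 | s <- enum S].

Definition Cset (S : {set 'I_n}) : ptset := fun x =>
  Wset x /\
  forall i j : 'I_n, (i <= j)%N ->
    if ((i < #|S|)%N && (j < i + nth 0%N (Sdesc S) i)%N)
    then 0 <= x 0 i + x 0 j
    else x 0 i + x 0 j <= 0.

(* The chambers of I(gl_n, V + wedge^2) are exactly the C(S) (given in the context). *)
Definition chamber (C : ptset) : Prop := exists S : {set 'I_n}, C = Cset S.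

Definition face (C F : ptset) : Prop :=
  F = C \/
  exists (l : pt) (c : R), l != 0 /\
    (forall x, C x -> c <= dotv l x) /\
    (exists x, C x /\ dotv l x = c) /\
    F = (fun x => C x /\ dotv l x = c).

Definition half_line (F : ptset) : Prop :=
  exists p v : pt, v != 0 /\ F = (fun x => exists t : R, 0 <= t /\ x = p + t *: v).

Definition extreme_ray (F : ptset) : Prop :=
  (exists C, chamber C /\ face C F) /\ half_line F.

Definition ray (v : pt) : ptset := fun x => exists t : R, 0 <= t /\ x = t *: v.

Definition vab (a b : nat) : pt :=
  \row_(i < n) (if (i < a)%N then 1 else if (n - b <= i)%N then -1 else 0).

(* pi_l^S = |S cap [n-l+1, oo)| ; with 0-based s standing for s+1 this is s >= n - l *)
Definition piS (S : {set 'I_n}) (l : nat) : nat := #|[set s in S | (n - l <= s)%N]|.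

End Defs.

(* Main.v *)
Require Import Defs.
From HB Require Import structures.
From mathcomp Require Import all_boot all_order all_algebra.
From mathcomp Require Import zify ring lra.
Import Order.TTheory GRing.Theory Num.Theory.
Set Implicit Arguments. Unset Strict Implicit. Unset Printing Implicit Defensive.

Lemma count_gt_nth (s : seq nat) i : sorted gtn s -> i < size s ->
  count (fun a => nth 0 s i < a) s = i.
Proof.
elim: s i => [|h t IH] i //= Hs Hi.
have Ht : sorted gtn t := path_sorted Hs.
have gtr : transitive gtn by move=> x y z H1 H2; exact: ltn_trans H2 H1.
have Hall : all (fun a => a < h) t by exact: (order_path_min gtr Hs).
case: i Hi => [|j] Hj /=.
- rewrite ltnn add0n; apply/eqP; rewrite -leqn0 leqNgt -has_count.
  apply/hasP => -[a Ha]; move/allP: Hall => /(_ a Ha) H1 H2.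
  by have := ltn_trans H1 H2; rewrite ltnn.
- have Hx : nth 0 t j < h by apply: (allP Hall); exact: mem_nth.
  by rewrite Hx IH.
Qed.

Definition inS n (S : {set 'I_n}) (u : nat) : bool := [exists s in S, (s : nat) == u].
Definition Nb n (S : {set 'I_n}) (t : nat) : nat := \sum_(s in S) (t <= s).

Lemma card_Nb n (S : {set 'I_n}) t : #|[set s in S | (t <= s)%N]| = Nb S t.
Proof.
rewrite /Nb -sum1_card big_mkcond /= [RHS]big_mkcond /=.
apply: eq_bigr => i _; rewrite !inE; by case: (i \in S); case: (t <= i).
Qed.

Lemma piS_Nb n (S : {set 'I_n}) l : piS S l = Nb S (n - l).
Proof. exact: card_Nb. Qed.

Lemma NbS n (S : {set 'I_n}) t : Nb S t = inS S t + Nb S t.+1.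
Proof.
rewrite /Nb.
have -> : \sum_(s in S) (t <= s) = \sum_(s in S) ((s == t :> nat) + (t < s)).
  by apply: eq_bigr => i _; case: (ltngtP t i).
rewrite big_split /=; congr (_ + _).
rewrite /inS; case: existsP => [[s0 /andP [Hs0 /eqP E]]|Hn].
- rewrite (bigD1 s0) //= E eqxx big1 // => i /andP [_ Hi].
  apply/eqP; rewrite eqb0; apply: contra Hi => /eqP Hi; apply/eqP; apply: val_inj.
  by rewrite /= Hi.
- rewrite big1 // => i Hi; apply/eqP; rewrite eqb0; apply/negP => He.
  by apply: Hn; exists i; rewrite Hi.
Qed.

Lemma inS_lt n (S : {set 'I_n}) t : inS S t -> t < n.
Proof. by case/existsP => s /andP [_ /eqP <-]. Qed.

Lemma Nb_ge n (S : {set 'I_n}) t : n <= t -> Nb S t = 0.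
Proof.
move=> Ht; rewrite /Nb big1 // => i _; apply/eqP; rewrite eqb0 -ltnNge.
exact: leq_trans (ltn_ord i) Ht.
Qed.

Lemma Nb0 n (S : {set 'I_n}) : Nb S 0 = #|S|.
Proof. by rewrite -card_Nb; apply: eq_card => i; rewrite !inE andbT. Qed.

Lemma Nb_anti n (S : {set 'I_n}) x y : x <= y -> Nb S y <= Nb S x.
Proof.
move/subnK => <-; elim: (y - x) => [|d IH] //=.
rewrite addSn; apply: leq_trans IH; rewrite (NbS S (d + x)); exact: leq_addl.
Qed.

Lemma Nb_lip n (S : {set 'I_n}) x y : x <= y -> Nb S x <= Nb S y + (y - x).
Proof.
move/subnK => <-; rewrite addnK; elim: (y - x) => [|d IH] //=.
  by rewrite addn0.
apply: leq_trans IH _; rewrite addSn (NbS S (d + x)).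
case: inS => /=; lia.
Qed.

Lemma Nb_le n (S : {set 'I_n}) x : Nb S x <= n - x.
Proof.
case: (leqP x n) => Hx.
- by have := Nb_lip S Hx; rewrite (Nb_ge S (leqnn n)).
- by rewrite Nb_ge // ltnW.
Qed.

Lemma Sdesc_sorted n (S : {set 'I_n}) : sorted gtn (Sdesc S).
Proof.
rewrite gtn_sorted_uniq_geq sort_uniq; apply/andP; split.
- rewrite map_inj_uniq ?enum_uniq // => a b /= [] /val_inj.
  done.
- apply: sort_sorted => a b; exact: leq_total.
Qed.

Lemma size_Sdesc n (S : {set 'I_n}) : size (Sdesc S) = #|S|.
Proof. by rewrite size_sort size_map cardE. Qed.

Lemma count_Sdesc n (S : {set 'I_n}) c :
  count (fun a => c.+1 < a) (Sdesc S) = Nb S c.+1.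
Proof.
have -> : count (fun a => c.+1 < a) (Sdesc S) =
          count (fun a => c.+1 < a) [seq (nat_of_ord s).+1 | s <- enum S].
  by apply/permP; rewrite perm_sort perm_refl.
rewrite count_map -sum1_count big_enum_cond /= /Nb [RHS]big_mkcond [LHS]big_mkcond /=.
by apply: eq_bigr => i _; rewrite ltnS; case: (i \in S); case: (c < i).
Qed.

Lemma nth_Sdesc n (S : {set 'I_n}) i : i < #|S| ->
  exists c, [/\ inS S c, nth 0 (Sdesc S) i = c.+1 & Nb S c.+1 = i].
Proof.
move=> Hi; rewrite -size_Sdesc in Hi.
have Hm := mem_nth 0 Hi; rewrite mem_sort in Hm.
case/mapP: Hm => s Hs Hns; exists s; split.
- by apply/existsP; exists s; rewrite -mem_enum Hs eqxx.
- done.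
- by rewrite -count_Sdesc -Hns count_gt_nth // Sdesc_sorted.
Qed.

Lemma nth_Sdesc_inS n (S : {set 'I_n}) c : inS S c ->
  Nb S c.+1 < #|S| /\ nth 0 (Sdesc S) (Nb S c.+1) = c.+1.
Proof.
move=> Hc.
have Hlt : Nb S c.+1 < #|S|.
  rewrite -Nb0; apply: leq_trans (Nb_anti S (leq0n c)).
  by rewrite (NbS S c) Hc.
split => //.
have [c' [Hc' Hn HN]] := nth_Sdesc Hlt.
rewrite Hn; congr (_.+1).
case: (ltngtP c' c) => // H.
- have := Nb_anti S H; rewrite HN (NbS S c) Hc /=; lia.
- have := Nb_anti S H; rewrite -HN (NbS S c') Hc' /=; lia.
Qed.

Local Open Scope ring_scope.

Lemma dotvD (R : realFieldType) n (a b x : pt R n) : dotv (a + b) x = dotv a x + dotv b x.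
Proof. by rewrite /dotv -big_split /=; apply: eq_bigr => i _; rewrite mxE mulrDl. Qed.
Lemma dotvN (R : realFieldType) n (a x : pt R n) : dotv (- a) x = - dotv a x.
Proof. by rewrite /dotv -sumrN; apply: eq_bigr => i _; rewrite mxE mulNr. Qed.
Lemma dotvB (R : realFieldType) n (a b x : pt R n) : dotv (a - b) x = dotv a x - dotv b x.
Proof. by rewrite dotvD dotvN. Qed.
Lemma dotv0 (R : realFieldType) n (x : pt R n) : dotv 0 x = 0.
Proof. by rewrite /dotv big1 // => i _; rewrite mxE mul0r. Qed.
Lemma dotvZ (R : realFieldType) n (a x : pt R n) t : dotv a (t *: x) = t * dotv a x.
Proof. by rewrite /dotv mulr_sumr; apply: eq_bigr => i _; rewrite mxE mulrCA. Qed.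
Lemma dotv_sum (R : realFieldType) n (I : finType) (P : pred I) (F : I -> pt R n) x :
  dotv (\sum_(k | P k) F k) x = \sum_(k | P k) dotv (F k) x.
Proof.
rewrite /dotv exchange_big /=; apply: eq_bigr => i _.
by rewrite summxE mulr_suml.
Qed.

Definition uvec (R : realFieldType) n (j : nat) : pt R n := \row_(i < n) ((i : nat) == j)%:R.

Lemma dotv_uvec (R : realFieldType) n (j : 'I_n) (x : pt R n) :
  dotv (uvec R n j) x = x 0 j.
Proof.
rewrite /dotv (bigD1 j) //= big1 ?addr0.
  by rewrite mxE eqxx mul1r.
move=> i Hi; rewrite mxE; case: eqP => [E|_]; last by rewrite mul0r.
by case/eqP: Hi; apply: val_inj.
Qed.

Lemma Cset_scale (R : realFieldType) n (S : {set 'I_n}) (x : pt R n) t :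
  0 <= t -> Cset S x -> Cset S (t *: x).
Proof.
move=> Ht [HW HC]; split.
- by move=> i j Hij; rewrite !mxE ler_wpM2l // HW.
- move=> i j Hij; have := HC i j Hij; rewrite !mxE -mulrDr.
  case: ifP => _ H; first exact: mulr_ge0.
  exact: mulr_ge0_le0.
Qed.

Local Close Scope ring_scope.
Definition P n (S : {set 'I_n}) m := Nb S (n - m).
Definition plus n (S : {set 'I_n}) m := inS S (n - m.+1).

Lemma P_succ n (S : {set 'I_n}) m : (m < n)%N -> P S m.+1 = (plus S m + P S m)%N.
Proof.
move=> Hm; rewrite /P /plus (NbS S (n - m.+1)).
by have -> : (n - m.+1).+1 = n - m by lia.
Qed.
Lemma P_le n (S : {set 'I_n}) m : (P S m <= m)%N.
Proof. have := Nb_le S (n - m); rewrite /P; lia. Qed.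
Lemma P_mono n (S : {set 'I_n}) m m' : (m <= m')%N -> (P S m <= P S m')%N.
Proof. move=> H; apply: Nb_anti; lia. Qed.
Lemma P_lip n (S : {set 'I_n}) m m' : (m <= m')%N -> (P S m' <= P S m + (m' - m))%N.
Proof. move=> H; have := @Nb_lip n S (n - m') (n - m); rewrite /P; lia. Qed.
Lemma P_card n (S : {set 'I_n}) m : (P S m <= #|S|)%N.
Proof. rewrite -Nb0; apply: Nb_anti; lia. Qed.
Lemma P_n n (S : {set 'I_n}) : P S n = #|S|.
Proof. by rewrite /P subnn Nb0. Qed.
Lemma plus_lt n (S : {set 'I_n}) m : (m < n)%N -> plus S m -> (P S m < #|S|)%N.
Proof.
move=> Hm Hp; have := P_card S m.+1; rewrite P_succ // Hp; lia.
Qed.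
Lemma idx_lt n (S : {set 'I_n}) m : (m < n)%N -> (n - m.+1 + P S m < n)%N.
Proof. move=> Hm; have := P_le S m; lia. Qed.
Lemma idxp_lt n (S : {set 'I_n}) m : (m < n)%N -> plus S m -> (P S m < n)%N.
Proof. move=> Hm Hp; have := plus_lt Hm Hp; have := max_card S; rewrite card_ord; lia. Qed.

Lemma cond_row n (S : {set 'I_n}) c j : inS S c ->
  ((Nb S c.+1 < #|S|)%N && (j < Nb S c.+1 + nth 0%N (Sdesc S) (Nb S c.+1))%N)
  = (j < Nb S c.+1 + c.+1)%N.
Proof. by move=> Hc; have [-> ->] := nth_Sdesc_inS Hc. Qed.

Local Open Scope ring_scope.
Definition Y (R : realFieldType) n (S : {set 'I_n}) m : pt R n :=
  if (m < n)%N then (if plus S m then uvec R n (P S m)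
                     else - uvec R n (n - m.+1 + P S m)) else 0.

Lemma Y_ge (R : realFieldType) n (S : {set 'I_n}) m x : (n <= m)%N -> dotv (Y R S m) x = 0.
Proof. by move=> H; rewrite /Y ltnNge H dotv0. Qed.
Lemma Y_p (R : realFieldType) n (S : {set 'I_n}) m (i : 'I_n) x : (m < n)%N -> plus S m ->
  (i : nat) = P S m -> dotv (Y R S m) x = x 0 i.
Proof. by move=> Hm Hp Hi; rewrite /Y Hm Hp -Hi dotv_uvec. Qed.
Lemma Y_m (R : realFieldType) n (S : {set 'I_n}) m (i : 'I_n) x : (m < n)%N -> ~~ plus S m ->
  (i : nat) = (n - m.+1 + P S m)%N -> dotv (Y R S m) x = - x 0 i.
Proof. by move=> Hm Hp Hi; rewrite /Y Hm (negbTE Hp) -Hi dotvN dotv_uvec. Qed.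

Lemma cond_row' n (S : {set 'I_n}) i c j : inS S c -> i = Nb S c.+1 ->
  ((i < #|S|)%N && (j < i + nth 0%N (Sdesc S) i)%N) = (j < i + c.+1)%N.
Proof. by move=> Hc ->; exact: cond_row. Qed.

Lemma A1 (R : realFieldType) n (S : {set 'I_n}) (x : pt R n) m :
  Cset S x -> (m < n)%N -> dotv (Y R S m.+1) x <= dotv (Y R S m) x.
Proof.
move=> [HW HC] Hm.
have HPs := P_succ S Hm.
have HPl := P_le S m.
case: (ltnP m.+1 n) => Hm1; last first.
- rewrite Y_ge //.
  case Hp: (plus S m).
  + have Hi := idxp_lt Hm Hp.
    rewrite (Y_p (m := m) (i := Ordinal Hi)) //.
    have := HC (Ordinal Hi) (Ordinal Hi) (leqnn _); rewrite /=.
    rewrite (@cond_row' n S (P S m) (n - m.+1)) //; last by rewrite /P; congr Nb; lia.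
    have -> : (P S m < P S m + (n - m.+1).+1)%N by lia.
    move=> H; lra.
  + have Hi := idx_lt S Hm.
    rewrite (Y_m (m := m) (i := Ordinal Hi)) ?Hp //.
    have := HC (Ordinal Hi) (Ordinal Hi) (leqnn _); rewrite /=.
    have Hn : m.+1 = n by apply/eqP; rewrite eqn_leq Hm Hm1.
    have HPn : P S m.+1 = #|S| by rewrite /P Hn subnn Nb0.
    rewrite HPs Hp add0n in HPn.
    have -> : (n - m.+1 + P S m < #|S|)%N = false by apply/negbTE; rewrite -leqNgt; lia.
    move=> /= H; lra.
- have HPs1 := P_succ S Hm1.
  case Hp: (plus S m); case Hp1: (plus S m.+1).
  + have Hi := idxp_lt Hm Hp; have Hi1 := idxp_lt Hm1 Hp1.
    rewrite (Y_p (m := m) (i := Ordinal Hi)) // (Y_p (m := m.+1) (i := Ordinal Hi1)) //.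
    apply: HW => /=; lia.
  + have Hi := idxp_lt Hm Hp; have Hi1 := idx_lt S Hm1.
    rewrite (Y_p (m := m) (i := Ordinal Hi)) // (Y_m (m := m.+1) (i := Ordinal Hi1)) ?Hp1 //.
    have Hle : (Ordinal Hi <= Ordinal Hi1)%N by rewrite /=; lia.
    have := HC _ _ Hle; rewrite /=.
    rewrite (@cond_row' n S (P S m) (n - m.+1)) //; last by rewrite /P; congr Nb; lia.
    have -> : (n - m.+2 + P S m.+1 < P S m + (n - m.+1).+1)%N by lia.
    move=> H; lra.
  + have Hi := idx_lt S Hm; have Hi1 := idxp_lt Hm1 Hp1.
    rewrite (Y_m (m := m) (i := Ordinal Hi)) ?Hp // (Y_p (m := m.+1) (i := Ordinal Hi1)) //.
    have Hle : (Ordinal Hi1 <= Ordinal Hi)%N by rewrite /=; lia.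
    have := HC _ _ Hle; rewrite /=.
    rewrite (@cond_row' n S (P S m.+1) (n - m.+2)) //; last by rewrite /P; congr Nb; lia.
    have -> : (n - m.+1 + P S m < P S m.+1 + (n - m.+2).+1)%N = false.
      by apply/negbTE; rewrite -leqNgt; lia.
    move=> H; lra.
  + have Hi := idx_lt S Hm; have Hi1 := idx_lt S Hm1.
    rewrite (Y_m (m := m) (i := Ordinal Hi)) ?Hp // (Y_m (m := m.+1) (i := Ordinal Hi1)) ?Hp1 //.
    have Hle : (Ordinal Hi1 <= Ordinal Hi)%N by rewrite /=; lia.
    have := HW _ _ Hle; lra.
Qed.

Definition G (R : realFieldType) n (S : {set 'I_n}) t : pt R n :=
  \row_(i < n) (if (i < Nb S t)%N then 1 else if (t + Nb S t <= i)%N then -1 else 0).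
Definition g (R : realFieldType) n (S : {set 'I_n}) m : pt R n :=
  vab R n (piS S m.+1) (m.+1 - piS S m.+1).

Lemma g_G (R : realFieldType) n (S : {set 'I_n}) m : (m < n)%N -> g R S m = G R S (n - m.+1).
Proof.
move=> Hm; apply/rowP => i; rewrite !mxE piS_Nb.
have HN := Nb_le S (n - m.+1).
by have -> : (n - (m.+1 - Nb S (n - m.+1)) = n - m.+1 + Nb S (n - m.+1))%N by lia.
Qed.

Lemma G_in (R : realFieldType) n (S : {set 'I_n}) t : Cset S (G R S t).
Proof.
have HtS : (Nb S t <= #|S|)%N by rewrite -Nb0; apply: Nb_anti.
split.
- move=> i j Hij; rewrite !mxE.
  by repeat case: ifP => ?; try lra; exfalso; lia.
- move=> i j Hij; case Hk: (i < #|S|)%N; last first.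
    rewrite /= !mxE.
    by repeat case: ifP => ?; try lra; exfalso; lia.
  have [c [Hc Hn HN]] := nth_Sdesc Hk.
  rewrite /= Hn -HN.
  have e : Nb S c = (Nb S c.+1 + 1)%N by rewrite NbS Hc addnC.
  have a1 : (t <= c)%N -> (Nb S c <= Nb S t)%N by apply: Nb_anti.
  have l1 : (c.+1 <= t)%N -> (Nb S c.+1 <= Nb S t + (t - c.+1))%N by apply: Nb_lip.
  have l2 : (t <= c)%N -> (Nb S t <= Nb S c + (c - t))%N by apply: Nb_lip.
  have a2 : (c.+1 <= t)%N -> (Nb S t <= Nb S c.+1)%N by apply: Nb_anti.
  rewrite !mxE.
  by repeat case: ifP => ?; try lra; exfalso; lia.
Qed.

Lemma YG (R : realFieldType) n (S : {set 'I_n}) m m' : (m' < n)%N ->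
  dotv (Y R S m) (g R S m') = (m <= m')%N%:R.
Proof.
move=> Hm'.
case: (ltnP m n) => Hm; last first.
  by rewrite Y_ge // leqNgt (leq_trans Hm' Hm).
have f1 := P_succ S Hm.
have f2 : (m.+1 <= m'.+1)%N -> (P S m.+1 <= P S m'.+1)%N by apply: P_mono.
have f3 : (m.+1 <= m'.+1)%N -> (P S m'.+1 <= P S m.+1 + (m'.+1 - m.+1))%N by apply: P_lip.
have f4 : (m'.+1 <= m)%N -> (P S m'.+1 <= P S m)%N by apply: P_mono.
have f5 : (m'.+1 <= m)%N -> (P S m <= P S m'.+1 + (m - m'.+1))%N by apply: P_lip.
have f6 : (P S n <= P S m'.+1 + (n - m'.+1))%N by apply: P_lip.
have f6' := P_n S.
have f7 := P_le S m; have f8 := P_le S m'.+1; have f9 := P_card S m.+1.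
rewrite g_G //.
case Hp: (plus S m).
- have Hi := idxp_lt Hm Hp.
  rewrite (Y_p (m := m) (i := Ordinal Hi)) // mxE /= -/(P S m'.+1).
  rewrite Hp in f1.
  case: (leqP m m') => Hmm /=; repeat case: ifP => ?; try lra; exfalso; lia.
- have Hi := idx_lt S Hm.
  rewrite (Y_m (m := m) (i := Ordinal Hi)) ?Hp // mxE /= -/(P S m'.+1).
  rewrite Hp in f1.
  case: (leqP m m') => Hmm /=; repeat case: ifP => ?; try lra; exfalso; lia.
Qed.

Definition Fv (R : realFieldType) n (S : {set 'I_n}) m : pt R n := Y R S m - Y R S m.+1.

Lemma FG (R : realFieldType) n (S : {set 'I_n}) m m' : (m' < n)%N ->
  dotv (Fv R S m) (g R S m') = (m == m')%N%:R.
Proof.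
move=> H; rewrite /Fv dotvB !YG //.
by case: (ltngtP m m') => H1 /=; rewrite ?subrr ?subr0 //; lra.
Qed.

Lemma A2 (R : realFieldType) n (S : {set 'I_n}) (x : pt R n) :
  x = \sum_(m < n) dotv (Fv R S m) x *: g R S m.
Proof.
pose Fm : 'M[R]_n := \matrix_(m < n, j < n) (Fv R S m) 0 j.
pose Gm : 'M[R]_n := \matrix_(j < n, m < n) (g R S m) 0 j.
have HFG : Fm *m Gm = 1%:M.
  apply/matrixP => m m'; rewrite !mxE.
  rewrite -(@FG R n S m m' (ltn_ord m')) /dotv; apply: eq_bigr => j _; by rewrite !mxE.
have HGF := mulmx1C HFG.
apply/rowP => i; rewrite summxE.
have -> : x 0 i = \sum_(j < n) (Gm *m Fm) i j * x 0 j.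
  rewrite HGF (bigD1 i) //= big1 ?addr0; first by rewrite mxE eqxx mul1r.
  by move=> j Hj; rewrite mxE eq_sym (negbTE Hj) mul0r.
under eq_bigr => j _ do rewrite mxE big_distrl.
rewrite exchange_big /=; apply: eq_bigr => m _.
rewrite [RHS]mxE /dotv big_distrl; apply: eq_bigr => j _; rewrite !mxE /=; ring.
Qed.

From Stdlib Require Import Classical FunctionalExtensionality PropExtensionality.

Lemma dotv_sumr (R : realFieldType) n (I : finType) (Q : pred I) (F : I -> pt R n) l :
  dotv l (\sum_(k | Q k) F k) = \sum_(k | Q k) dotv l (F k).
Proof.
rewrite /dotv exchange_big /=; apply: eq_bigr => i _.
by rewrite summxE mulr_sumr.
Qed.

Lemma Cset0 (R : realFieldType) n (S : {set 'I_n}) : Cset S (0 : pt R n).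
Proof. by have := Cset_scale (lexx (0:R)) (G_in R S 0); rewrite scale0r. Qed.

Lemma g_in (R : realFieldType) n (S : {set 'I_n}) m : (m < n)%N -> Cset S (g R S m).
Proof. by move=> H; rewrite g_G //; apply: G_in. Qed.

Lemma f_ge0 (R : realFieldType) n (S : {set 'I_n}) (x : pt R n) m :
  Cset S x -> (m < n)%N -> 0 <= dotv (Fv R S m) x.
Proof. by move=> Hx Hm; rewrite /Fv dotvB subr_ge0; apply: A1. Qed.

Lemma g_neq0 (R : realFieldType) n (S : {set 'I_n}) m : (m < n)%N -> g R S m != 0.
Proof.
move=> Hm; apply/negP => /eqP E; have := FG R S m Hm; rewrite E.
have -> : dotv (Fv R S m) 0 = 0 by rewrite -(scale0r (0 : pt R n)) dotvZ mul0r.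
by rewrite eqxx => /eqP; rewrite eq_sym oner_eq0.
Qed.

Lemma ray_hl (R : realFieldType) n (v : pt R n) : v != 0 -> half_line (ray v).
Proof.
move=> Hv; exists 0, v; split => //.
apply: functional_extensionality => x; apply: propositional_extensionality.
by split => -[t [Ht E]]; exists t; rewrite ?add0r in E *.
Qed.

Lemma dotvr0 (R : realFieldType) n (l : pt R n) : dotv l 0 = 0.
Proof. by rewrite -(scale0r (0 : pt R n)) dotvZ mul0r. Qed.

Lemma face_ray (R : realFieldType) n (S : {set 'I_n}) m : (m < n)%N ->
  face (Cset S) (ray (g R S m)).
Proof.
move=> Hm.
set L := \sum_(k < n | (k : nat) != m) Fv R S k.
have HL : forall x, dotv L x = \sum_(k < n | (k : nat) != m) dotv (Fv R S k) x.
  by move=> x; rewrite dotv_sum.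
have Hge : forall x, Cset S x -> 0 <= dotv L x.
  by move=> x Hx; rewrite HL sumr_ge0 // => k _; exact: f_ge0.
have Heq : ray (g R S m) = (fun x => Cset S x /\ dotv L x = 0).
  apply: functional_extensionality => x; apply: propositional_extensionality; split.
  - case=> t [Ht ->]; split; first by apply: Cset_scale => //; exact: g_in.
    rewrite HL; apply: big1 => k Hk; by rewrite dotvZ FG // (negbTE Hk) mulr0.
  - case=> Hx H0.
    have Hz : forall k : 'I_n, (k : nat) != m -> dotv (Fv R S k) x = 0.
      move=> k Hk.
      have := @psumr_eq0P R _ (fun k : 'I_n => (k : nat) != m) (fun k => dotv (Fv R S k) x).
      apply => //; last by rewrite -HL.
      by move=> k' _; exact: f_ge0.
    exists (dotv (Fv R S m) x); split; first exact: f_ge0.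
    rewrite {1}(A2 S x) (bigD1 (Ordinal Hm)) //= big1 ?addr0 // => k Hk.
    rewrite Hz ?scale0r //; apply: contra Hk => /eqP E; apply/eqP; exact: val_inj.
case: (eqVneq L 0) => HL0.
- left; rewrite Heq HL0.
  apply: functional_extensionality => x; apply: propositional_extensionality.
  by rewrite dotv0; split => [[]|].
- right; exists L, 0; split => //; split => //; split => //.
  by exists 0; split; [exact: Cset0 | exact: dotvr0].
Qed.

Lemma extreme_g (R : realFieldType) n (S : {set 'I_n}) m : (m < n)%N ->
  extreme_ray (ray (g R S m)).
Proof.
move=> Hm; split; last by apply: ray_hl; exact: g_neq0.
by exists (Cset S); split; [exists S | exact: face_ray].
Qed.

Lemma face_l (R : realFieldType) n (S : {set 'I_n}) F : face (Cset S) F ->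
  exists l : pt R n, (forall x, Cset S x -> 0 <= dotv l x) /\
    F = (fun x => Cset S x /\ dotv l x = 0).
Proof.
case=> [->|[l [c [_ [Hc [[x0 [Hx0 Ex0]] ->]]]]]].
- exists 0; split => [x _|]; first by rewrite dotv0.
  apply: functional_extensionality => x; apply: propositional_extensionality.
  by rewrite dotv0; split => [|[]].
- have c0 : c = 0.
    have H1 := Hc 0 (Cset0 R S); rewrite dotvr0 in H1.
    have H2 := Hc _ (Cset_scale (ler0n R 2) Hx0); rewrite dotvZ Ex0 in H2.
    lra.
  rewrite c0 in Hc *; exists l; split => //.
Qed.

Lemma face_hl (R : realFieldType) n (S : {set 'I_n}) F : face (Cset S) F -> half_line F ->
  exists m, (m < n)%N /\ F = ray (g R S m).
Proof.
move=> /face_l [l [Hl ->]] [p [v [Hv HF]]].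
have HF' : forall x, (Cset S x /\ dotv l x = 0) <-> exists t, 0 <= t /\ x = p + t *: v.
  by move=> x; rewrite -(equal_f HF x).
have Hlg : forall k : 'I_n, 0 <= dotv l (g R S k) by move=> k; apply: Hl; exact: g_in.
have Hdec : forall x, Cset S x ->
    dotv l x = \sum_(k < n) dotv (Fv R S k) x * dotv l (g R S k).
  move=> x Hx; rewrite {1}(A2 S x) dotv_sumr; apply: eq_bigr => k _; by rewrite dotvZ.
have Hz : forall x, Cset S x -> dotv l x = 0 -> forall k : 'I_n,
    dotv (Fv R S k) x * dotv l (g R S k) = 0.
  move=> x Hx H0 k.
  have := @psumr_eq0P R _ (predT : pred 'I_n) (fun k : 'I_n => dotv (Fv R S k) x * dotv l (g R S k)).
  apply => //; last by rewrite -Hdec.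
  by move=> k' _; apply: mulr_ge0; [exact: f_ge0 | exact: Hlg].
have Hin : forall k : 'I_n, dotv l (g R S k) = 0 -> exists t, 0 <= t /\ g R S k = p + t *: v.
  by move=> k Hk; apply/HF'; split => //; exact: g_in.
have [t0 [Ht0 E0]] : exists t, 0 <= t /\ (0 : pt R n) = p + t *: v.
  by apply/HF'; split; [exact: Cset0 | exact: dotvr0].
have Hp : p = - (t0 *: v) by apply/eqP; rewrite -addr_eq0 -E0.
case: (classic (exists k : 'I_n, dotv l (g R S k) = 0)) => [[m0 Hm0]|Hno]; last first.
  (* F = {0} *)
  exfalso; move/negP: Hv; apply.
  have Hall : forall x, Cset S x -> dotv l x = 0 -> x = 0.
    move=> x Hx H0; rewrite (A2 S x); apply: big1 => k _.
    have := Hz x Hx H0 k; move/eqP; rewrite mulf_eq0 => /orP [/eqP ->|/eqP Hk].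
      by rewrite scale0r.
    by exfalso; apply: Hno; exists k.
  have [Hp1 Hp2] : Cset S p /\ dotv l p = 0.
    by apply/HF'; exists 0; rewrite scale0r addr0.
  have [Hq1 Hq2] : Cset S (p + v) /\ dotv l (p + v) = 0.
    by apply/HF'; exists 1; rewrite scale1r ler01.
  have := Hall _ Hq1 Hq2; rewrite (Hall _ Hp1 Hp2) add0r => ->; done.
case: (classic (exists k : 'I_n, k != m0 /\ dotv l (g R S k) = 0)) => [[m1 [Hne Hm1]]|Hno].
  exfalso.
  have [ta [_ Ea]] := Hin _ Hm0; have [tb [_ Eb]] := Hin _ Hm1.
  rewrite Hp addrC -scalerBl in Ea; rewrite Hp addrC -scalerBl in Eb.
  have Fa := FG R S m0 (ltn_ord m0); have Fb := FG R S m0 (ltn_ord m1).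
  have Fc := FG R S m1 (ltn_ord m1).
  rewrite Ea dotvZ eqxx in Fa; rewrite Eb dotvZ in Fb.
  have Hne' : (m0 == m1 :> nat) = false by apply/negbTE; rewrite eq_sym.
  rewrite Hne' in Fb.
  have Htb : tb - t0 = 0.
    apply/eqP; move/eqP: Fb; rewrite mulf_eq0 => /orP [//|/eqP H].
    by move: Fa; rewrite H mulr0 => /eqP; rewrite eq_sym oner_eq0.
  by move: Fc; rewrite Eb Htb scale0r dotvr0 eqxx => /eqP; rewrite eq_sym oner_eq0.
exists m0; split => //.
apply: functional_extensionality => x; apply: propositional_extensionality; split.
- case=> Hx H0; exists (dotv (Fv R S m0) x); split; first exact: f_ge0.
  rewrite {1}(A2 S x) (bigD1 m0) //= big1 ?addr0 // => k Hk.
  have := Hz x Hx H0 k; move/eqP; rewrite mulf_eq0 => /orP [/eqP ->|/eqP Hk'].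
    by rewrite scale0r.
  by exfalso; apply: Hno; exists k.
- case=> t [Ht ->]; split; first by apply: Cset_scale => //; exact: g_in.
  by rewrite dotvZ Hm0 mulr0.
Qed.

Lemma vab_neq0 (R : realFieldType) n a b : (1 <= a + b <= n)%N -> vab R n a b != 0.
Proof.
move=> H; apply/eqP => E.
have Hn : (n.-1 < n)%N by lia.
have H0 : (0 < n)%N by lia.
case: (posnP a) => Ha.
- subst a; have := congr1 (fun v : pt R n => v 0 (Ordinal Hn)) E; clear E.
  rewrite !mxE /=; repeat case: ifP => ?; try (exfalso; lia); move=> ?; lra.
- have := congr1 (fun v : pt R n => v 0 (Ordinal H0)) E; clear E.
  rewrite !mxE /=; repeat case: ifP => ?; try (exfalso; lia); move=> ?; lra.
Qed.

Lemma vab_inj (R : realFieldType) n a b a' b' : (1 <= a + b <= n)%N -> (1 <= a' + b' <= n)%N ->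
  ray (vab R n a b) = ray (vab R n a' b') -> (a, b) = (a', b').
Proof.
move=> H H' E.
have [t [Ht Et]] : ray (vab R n a' b') (vab R n a b).
  by rewrite -E; exists 1; rewrite scale1r ler01.
have Hn : (n.-1 < n)%N by lia.
have H0 : (0 < n)%N by lia.
have Et1 : t = 1.
  case: (posnP a) => Ha.
  - subst a; have := congr1 (fun v : pt R n => v 0 (Ordinal Hn)) Et; clear Et E.
    rewrite !mxE /=; repeat case: ifP => ?; try (exfalso; lia); move=> ?; lra.
  - have := congr1 (fun v : pt R n => v 0 (Ordinal H0)) Et; clear Et E.
    rewrite !mxE /=; repeat case: ifP => ?; try (exfalso; lia); move=> ?; lra.
rewrite Et1 scale1r in Et.
have Ea : a = a'.
  case: (ltngtP a a') => // Hlt; exfalso.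
  - have Hi : (a < n)%N by lia.
    have := congr1 (fun v : pt R n => v 0 (Ordinal Hi)) Et; clear Et E.
    rewrite !mxE /=; repeat case: ifP => ?; try (exfalso; lia); move=> ?; lra.
  - have Hi : (a' < n)%N by lia.
    have := congr1 (fun v : pt R n => v 0 (Ordinal Hi)) Et; clear Et E.
    rewrite !mxE /=; repeat case: ifP => ?; try (exfalso; lia); move=> ?; lra.
subst a'; congr (_, _).
case: (ltngtP b b') => // Hlt; exfalso.
- have Hi : (n - b' < n)%N by lia.
  have := congr1 (fun v : pt R n => v 0 (Ordinal Hi)) Et; clear Et E.
  rewrite !mxE /=; repeat case: ifP => ?; try (exfalso; lia); move=> ?; lra.
- have Hi : (n - b < n)%N by lia.
  have := congr1 (fun v : pt R n => v 0 (Ordinal Hi)) Et; clear Et E.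
  rewrite !mxE /=; repeat case: ifP => ?; try (exfalso; lia); move=> ?; lra.
Qed.

Lemma inS_T n k u : inS [set s : 'I_n | (k <= s)%N] u = (u < n)%N && (k <= u)%N.
Proof.
apply/existsP/andP => [[s /andP [Hs /eqP <-]]|[Hu Hk]].
- by rewrite inE in Hs; split.
- by exists (Ordinal Hu); rewrite inE /= Hk eqxx.
Qed.

Lemma Nb_T n k d : (d <= n)%N -> Nb [set s : 'I_n | (k <= s)%N] (n - d) = (n - maxn (n - d) k)%N.
Proof.
elim: d => [|d IH] Hd.
- rewrite subn0 Nb_ge //; lia.
- rewrite NbS inS_T.
  have -> : (n - d.+1).+1 = (n - d)%N by lia.
  rewrite IH; last by lia.
  case: (leqP k (n - d.+1)) => H /=; rewrite ?andbT ?andbF; lia.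
Qed.

Lemma piS_T n a l : (a <= l <= n)%N -> piS [set s : 'I_n | (n - a <= s)%N] l = a.
Proof. move=> H; rewrite piS_Nb Nb_T; lia. Qed.

Lemma bcore (R : realFieldType) n (S : {set 'I_n}) a b : (1 <= a + b <= n)%N ->
  Cset S (vab R n a b) -> exists M, (M < n)%N /\ vab R n a b = g R S M.
Proof.
move=> Hab Hw.
set w := vab R n a b.
pose yv k := dotv (Y R S k) w.
have ystep : forall k, yv k.+1 <= yv k.
  move=> k; rewrite /yv; case: (ltnP k n) => Hk; first exact: A1.
  by rewrite !Y_ge // ltnW.
have ymono : forall k d, yv (k + d)%N <= yv k.
  move=> k; elim=> [|d IH]; first by rewrite addn0.
  by rewrite addnS; apply: le_trans (ystep _) IH.
have ymono' : forall k k', (k <= k')%N -> yv k' <= yv k.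
  by move=> k k' /subnK <-; rewrite addnC; apply: ymono.
have ypos : forall k, 0 <= yv k.
  move=> k; have := ymono k n; rewrite /yv Y_ge //; exact: leq_addl.
have yvals : forall k, yv k = 0 \/ yv k = 1 \/ yv k = -1.
  move=> k; rewrite /yv; case: (ltnP k n) => Hk; last by rewrite Y_ge //; left.
  case Hp: (plus S k).
  - have Hi := idxp_lt Hk Hp; rewrite (Y_p (m := k) (i := Ordinal Hi)) // /w mxE.
    by repeat case: ifP => ?; auto.
  - have Hi := idx_lt S Hk; rewrite (Y_m (m := k) (i := Ordinal Hi)) ?Hp // /w mxE.
    repeat case: ifP => ?; rewrite ?opprK ?oppr0; auto.
have yle1 : forall k, yv k <= 1.
  by move=> k; case: (yvals k) => [->|[->|->]]; lra.
have Hf : forall k, dotv (Fv R S k) w = yv k - yv k.+1 by move=> k; rewrite /Fv dotvB.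
have [M HM] : exists M : 'I_n, dotv (Fv R S M) w != 0.
  apply: NNPP => Hno; move/negP: (vab_neq0 R Hab); apply.
  rewrite -/w (A2 S w); apply/eqP; apply: big1 => k _.
  have : dotv (Fv R S k) w = 0.
    by apply: NNPP => H; apply: Hno; exists k; apply/eqP.
  by move=> ->; rewrite scale0r.
rewrite Hf in HM.
have HM1 : yv M = 1 /\ yv M.+1 = 0.
  have := ystep M; have := ypos M; have := ypos M.+1.
  move: HM; case: (yvals M) => [->|[->|->]]; case: (yvals M.+1) => [->|[->|->]];
    rewrite ?subrr ?eqxx //; move=> *; lra.
case: HM1 => HM1 HM2.
exists M; split => //.
rewrite -/w {1}(A2 S w) (bigD1 M) //= big1 ?addr0.
  by rewrite Hf HM1 HM2 subr0 scale1r.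
move=> k Hk; rewrite Hf.
case: (ltngtP k M) => Hlt.
- have h1 := ymono' _ _ Hlt; have h2 := ystep k; have h3 := yle1 k.
  rewrite HM1 in h1.
  have -> : yv k = yv k.+1 by lra.
  by rewrite subrr scale0r.
- have h1 := ymono' _ _ Hlt; have h2 := ystep k; have h3 := ypos k; have h4 := ypos k.+1.
  rewrite HM2 in h1.
  have -> : yv k = yv k.+1 by lra.
  by rewrite subrr scale0r.
- by exfalso; move/negP: Hk; apply; apply/eqP; apply: val_inj.
Qed.

Theorem theorem1p21 (R : realFieldType) (n : nat) :
  ((forall a b : nat, (1 <= a + b <= n)%N -> extreme_ray (ray (vab R n a b))) /\
   (forall a b a' b' : nat, (1 <= a + b <= n)%N -> (1 <= a' + b' <= n)%N ->
      ray (vab R n a b) = ray (vab R n a' b') -> (a, b) = (a', b')) /\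
   (forall F : ptset R n, extreme_ray F ->
      exists a b : nat, (1 <= a + b <= n)%N /\ F = ray (vab R n a b))) /\
  (forall (S : {set 'I_n}) (F : ptset R n),
     (extreme_ray F /\ (forall x, F x -> Cset S x)) <->
     (exists l : nat, (1 <= l <= n)%N /\
        F = ray (vab R n (piS S l) (l - piS S l)))).
Proof.
have ext_ab : forall a b, (1 <= a + b <= n)%N -> extreme_ray (ray (vab R n a b)).
  move=> a b H.
  pose S := [set s : 'I_n | (n - a <= s)%N].
  have Hm : ((a + b).-1 < n)%N by lia.
  have := extreme_g R S Hm; rewrite /g.
  have -> : (a + b).-1.+1 = (a + b)%N by lia.
  rewrite piS_T; last by lia.
  by have -> : (a + b - a = b)%N by lia.
have hl3 : forall F : ptset R n, extreme_ray F ->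
    exists a b : nat, (1 <= a + b <= n)%N /\ F = ray (vab R n a b).
  move=> F [[C [[S ->] Hf]] Hh].
  have [m [Hm ->]] := face_hl Hf Hh.
  exists (piS S m.+1), (m.+1 - piS S m.+1)%N; split => //.
  have := Nb_le S (n - m.+1); rewrite piS_Nb; lia.
split; first by split; [exact: ext_ab | split; [exact: vab_inj | exact: hl3]].
move=> S F; split.
- case=> Hext Hsub.
  have [a [b [Hab EF]]] := hl3 F Hext.
  have Hw : Cset S (vab R n a b).
    by apply: Hsub; rewrite EF; exists 1; rewrite scale1r ler01.
  have [M [HM E]] := bcore Hab Hw.
  by exists M.+1; split; [lia | rewrite EF E].
- case=> l [Hl ->].
  have Hm : (l.-1 < n)%N by lia.
  have E : g R S l.-1 = vab R n (piS S l) (l - piS S l).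
    by rewrite /g; have -> : l.-1.+1 = l by lia.
  rewrite -E; split; first exact: extreme_g.
  by move=> x [t [Ht ->]]; apply: Cset_scale => //; exact: g_in.
Qed.
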